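(* Let $G$ be a compact group, $\mathcal{X},\mathcal{Y}$ finite-dimensional real normed vector spaces, $\rho_1:G\to\mathrm{GL}(\mathcal{X})$, $\rho_2:G\to\mathrm{GL}(\mathcal{Y})$ continuous representations, and $p_\omega(\cdot\mid\mathbf{x})$ a fixed $G$ equivariant conditional distribution on $G$. Let $\{f_\theta\}_\theta$ be a family of continuous functions $\mathcal{X}\to\mathcal{Y}$ that is a universal approximator, i.e. for every continuous $\psi:\mathcal{X}\to\mathcal{Y}$, every compact $\mathcal{K}\subseteq\mathcal{X}$ and every $\epsilon>0$ there is $\theta$ with $\sup_{\mathbf{x}\in\mathcal{K}}\|\psi(\mathbf{x})-f_\theta(\mathbf{x})\|\le\epsilon$. Define $\phi_{\theta,\omega}(\mathbf{x})=\mathbb{E}_{g\sim p_\omega(\cdot\mid\mathbf{x})}[\rho_2(g)f_\theta(\rho_1(g)^{-1}\mathbf{x})]$. Then $\{\phi_{\theta,\omega}\}_\theta$ is a universal approximator of $G$ equivariant functions: for every continuous $G$ equivariant $\psi:\mathcal{X}\to\mathcal{Y}$ (i.e. $\psi(\rho_1(g)\mathbf{x})=\rho_2(g)\psi(\mathbf{x})$ for all $g,\mathbf{x}$), every compact $\mathcal{K}\subseteq\mathcal{X}$ and every $\epsilon>0$, there exists $\theta$ with $\sup_{\mathbf{x}\in\mathcal{K}}\|\psi(\mathbf{x})-\phi_{\theta,\omega}(\mathbf{x})\|\le\epsilon$.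
   Context: A conditional distribution on $G$ is a family $\{p_\omega(\cdot\mid\mathbf{x})\}_{\mathbf{x}\in\mathcal{X}}$ of Borel probability measures on $G$. It is called $G$ equivariant if for all $\mathbf{x}\in\mathcal{X}$ and $g'\in G$, the pushforward of $p_\omega(\cdot\mid\mathbf{x})$ under left multiplication $g\mapsto g'g$ equals $p_\omega(\cdot\mid\rho_1(g')\mathbf{x})$ (for densities: $p_\omega(g\mid\mathbf{x})=p_\omega(g'g\mid\rho_1(g')\mathbf{x})$ for all $\mathbf{x},g,g'$). *)

(* Defs.v *)
From HB Require Import structures.
From mathcomp Require Import all_boot all_order all_algebra.
From mathcomp Require Import all_classical all_reals all_analysis.
Set Implicit Arguments. Unset Strict Implicit. Unset Printing Implicit Defensive.
Import Order.TTheory GRing.Theory Num.Theory.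
Import numFieldNormedType.Exports.
Local Open Scope classical_set_scope.
Local Open Scope ring_scope.

Definition is_compact_group (G : ptopologicalType)
    (mul : G -> G -> G) (inv : G -> G) (e : G) : Prop :=
  [/\ (forall a b c, mul a (mul b c) = mul (mul a b) c),
      (forall a, mul e a = a /\ mul a e = a),
      (forall a, mul (inv a) a = e /\ mul a (inv a) = e),
      continuous (fun ab : G * G => mul ab.1 ab.2) &
      continuous inv /\ compact [set: G] /\ hausdorff_space G].

Definition borel_of (G : ptopologicalType) := g_sigma_algebraType (@open G).

Definition is_cont_rep (R : realType) (G : ptopologicalType)
    (mul : G -> G -> G) (n : nat) (rho : G -> 'M[R]_n) : Prop :=
  [/\ (forall g, rho g \in unitmx),
      (forall g h, rho (mul g h) = rho g *m rho h) &
      continuous rho].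

Definition is_norm (R : realType) (V : lmodType R) (N : V -> R) : Prop :=
  [/\ (forall v, N v = 0 -> v = 0),
      (forall (a : R) v, N (a *: v) = `|a| * N v) &
      (forall u v, N (u + v) <= N u + N v)].

(* G-equivariance of a conditional distribution x |-> p(.|x) on G:
   the pushforward of p(.|x) under g |-> g' g is p(.|rho1(g') x). *)
Definition equivariant_cond_distr (R : realType) (G : ptopologicalType)
    (mul : G -> G -> G) (n : nat) (rho1 : G -> 'M[R]_n)
    (p : 'cV[R]_n -> probability (borel_of G) R) : Prop :=
  forall (x : 'cV[R]_n) (g' : G) (A : set (borel_of G)), measurable A ->
    p x ((fun g : borel_of G => (mul g' g : borel_of G)) @^-1` A)
    = p (rho1 g' *m x) A.

Definition equivariant_fun (R : realType) (G : Type) (n m : nat)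
    (rho1 : G -> 'M[R]_n) (rho2 : G -> 'M[R]_m) (psi : 'cV[R]_n -> 'cV[R]_m) :=
  forall g x, psi (rho1 g *m x) = rho2 g *m psi x.

Definition expectation_vec (R : realType) d (T : measurableType d) (m : nat)
    (P : probability T R) (F : T -> 'cV[R]_m) : 'cV[R]_m :=
  \col_i (Rintegral P setT (fun t => F t i ord0)).

Definition symmetrized (R : realType) (G : ptopologicalType) (n m : nat)
    (rho1 : G -> 'M[R]_n) (rho2 : G -> 'M[R]_m)
    (p : 'cV[R]_n -> probability (borel_of G) R)
    (f : 'cV[R]_n -> 'cV[R]_m) (x : 'cV[R]_n) : 'cV[R]_m :=
  expectation_vec (p x)
    (fun g : borel_of G => rho2 g *m f (invmx (rho1 g) *m x)).

(* Main.v *)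
Require Import Defs.
From HB Require Import structures.
From mathcomp Require Import all_boot all_order all_algebra.
From mathcomp Require Import all_classical all_reals all_analysis.
From mathcomp Require Import lra.
Import Order.TTheory GRing.Theory Num.Theory.
Import numFieldNormedType.Exports.
Local Open Scope classical_set_scope.
Local Open Scope ring_scope.

Section H.
Variable R : realType.

Lemma mx_cont_entry (T : topologicalType) a b (F : T -> 'M[R]_(a,b)) :
  (forall i j, continuous (fun t => F t i j)) -> continuous F.
Proof.
move=> cF t; apply/cvg_mx_entourageP => A entA.
have H : \forall s \near t, forall i j, (F t i j, F s i j) \in A.
  apply: (@filter_forall _ _ (fun i s => forall j, (F t i j, F s i j) \in A) (nbhs t) _) => i.
  apply: (@filter_forall _ _ (fun j s => (F t i j, F s i j) \in A) (nbhs t) _) => j.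
  have Hc := cF i j t. have := (proj1 (@cvg_entourageP _ _ _ _) Hc) A entA.
  move=> H0; near=> s; rewrite inE; near: s; exact: H0.
exact: H.
Unshelve. all: by end_near. Qed.

Lemma cont_sum (T : topologicalType) (I : Type) (r : seq I) (P : pred I)
  (f : I -> T -> R) : (forall i, continuous (f i)) ->
  continuous (fun t => \sum_(i <- r | P i) f i t).
Proof.
move=> cf; elim: r => [|i r IH].
  under eq_fun do rewrite big_nil; exact: cst_continuous.
under eq_fun do rewrite big_cons.
case: (P i).
  by move=> t; apply: continuousD; [exact: cf|exact: IH].
exact: IH.
Qed.

Lemma cont_mulmx (T : topologicalType) a b c (F : T -> 'M[R]_(a,b)) (H : T -> 'M[R]_(b,c)) :
  continuous F -> continuous H -> continuous (fun t => F t *m H t).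
Proof.
move=> cF cH; apply: mx_cont_entry => i j.
under eq_fun do rewrite mxE.
apply: cont_sum => k t; apply: continuousM.
  exact: (continuous_comp (cF t) (@coord_continuous _ _ _ i k _)).
exact: (continuous_comp (cH t) (@coord_continuous _ _ _ k j _)).
Qed.


Lemma entry_le_norm a b (M : 'M[R]_(a,b)) i j : `|M i j| <= `|M|.
Proof.
have -> : `|M| = mx_norm M by [].
rewrite mx_normrE (bigD1 (i, j)) //=.
by rewrite le_max lexx.
Qed.

Lemma norm_le_entries a b (M : 'M[R]_(a,b)) (c : R) : 0 <= c ->
  (forall i j, `|M i j| <= c) -> `|M| <= c.
Proof.
move=> c0 H; have -> : `|M| = mx_norm M by [].
rewrite mx_normrE.
elim/big_ind: _ => // x y hx hy; by rewrite ge_max hx hy.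
Qed.

Lemma cont_of_lip (V : normedModType R) (N : V -> R) C : 0 <= C ->
  (forall u v, `|N u - N v| <= C * `|u - v|) -> continuous N.
Proof.
move=> C0 H x; apply/cvgrPdist_lt => e e0.
have d0 : 0 < e / (C + 1) by apply: divr_gt0 => //; lra.
have Hd : \forall y \near x, `|x - y| < e / (C + 1).
  by have [/(_ (@cvg_refl _ _)) + _] := @fcvgrPdist_lt _ _ (nbhs x) _ x; apply.
near=> y; apply: le_lt_trans (H x y) _.
have hy : `|x - y| < e / (C + 1) by near: y.
have E : e / (C + 1) * (C + 1) = e by rewrite mulfVK //; apply/eqP => /eqP; lra.
have n0 : 0 <= `|x - y| by [].
nra.
Unshelve. all: by end_near. Qed.


Lemma norm_trmx a b (M : 'M[R]_(a,b)) : `|M^T| = `|M|.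
Proof.
apply/le_anti; apply/andP; split; apply: norm_le_entries => // i j.
  by rewrite mxE; exact: entry_le_norm.
by have := @entry_le_norm _ _ (M^T) j i; rewrite mxE.
Qed.

Lemma trmx_cont a b : continuous (fun M : 'M[R]_(a,b) => M^T).
Proof.
apply: mx_cont_entry => i j; under eq_fun do rewrite mxE.
exact: coord_continuous.
Qed.

Section NY.
Variables (m : nat) (NY : 'cV[R]_m -> R).
Hypothesis hN : is_norm NY.

Lemma NYZ a v : NY (a *: v) = `|a| * NY v.
Proof. by case: hN. Qed.
Lemma NYD u v : NY (u + v) <= NY u + NY v.
Proof. by case: hN. Qed.
Lemma NY_eq0 v : NY v = 0 -> v = 0.
Proof. by case: hN => H _ _; exact: H. Qed.

Lemma NY0 : NY 0 = 0.
Proof. by rewrite -(scale0r (0 : 'cV[R]_m)) NYZ normr0 mul0r. Qed.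
Lemma NYN v : NY (- v) = NY v.
Proof. by rewrite -scaleN1r NYZ normrN normr1 mul1r. Qed.
Lemma NY_ge0 v : 0 <= NY v.
Proof. have := NYD v (- v); rewrite subrr NY0 NYN; lra. Qed.

Lemma NY_sum (I : Type) (r : seq I) (P : pred I) (F : I -> 'cV[R]_m) :
  NY (\sum_(i <- r | P i) F i) <= \sum_(i <- r | P i) NY (F i).
Proof.
elim: r => [|i r IH]; first by rewrite !big_nil NY0.
rewrite !big_cons; case: (P i) => //.
by apply: le_trans (NYD _ _) _; rewrite lerD2l.
Qed.

Definition CN := \sum_(i < m) NY (delta_mx i ord0).

Lemma CN_ge0 : 0 <= CN.
Proof. by apply: sumr_ge0 => i _; exact: NY_ge0. Qed.

Lemma NY_up w : NY w <= CN * `|w|.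
Proof.
rewrite {1}(matrix_sum_delta w).
under eq_bigr do rewrite big_ord1.
apply: le_trans (NY_sum _ _ _ _) _.
rewrite /CN mulr_suml; apply: ler_sum => i _.
rewrite NYZ mulrC; apply: ler_wpM2l; first exact: NY_ge0.
exact: entry_le_norm.
Qed.

Lemma NY_lip u v : `|NY u - NY v| <= CN * `|u - v|.
Proof.
have h1 : NY u <= NY v + NY (u - v).
  by have := NYD v (u - v); rewrite addrC subrK.
have h2 : NY v <= NY u + NY (u - v).
  by have := NYD u (v - u); rewrite addrC subrK -opprB NYN.
have h3 := NY_up (u - v).
rewrite ler_norml; apply/andP; split; lra.
Qed.

Lemma NY_cont : continuous NY.
Proof. exact: (@cont_of_lip _ NY CN CN_ge0 NY_lip). Qed.

Lemma NY_low : exists2 c, 0 < c & forall w, `|w| <= c * NY w.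
Proof.
pose Sr := [set v : 'rV[R]_m | `|v| = 1].
pose Sc := [set w : 'cV[R]_m | `|w| = 1].
have cSr : compact Sr.
  apply: bounded_closed_compact.
    exists 1; split => // M M1 v Sv; rewrite /= Sv; lra.
  apply: (@preimage_closed _ _ (fun v : 'rV[R]_m => `|v|) [set 1]).
    by move=> x _; exact: norm_continuous.
  exact: closed_eq.
have cSc : compact Sc.
  have -> : Sc = (fun v : 'rV[R]_m => v^T) @` Sr.
    apply/seteqP; split => w.
      by move=> Hw; exists w^T; rewrite ?trmxK // /Sr /= norm_trmx.
    by move=> [v Hv <-]; rewrite /Sc /= norm_trmx.
  apply: continuous_compact => //; apply: continuous_subspaceT.
  exact: trmx_cont.
have [[w0 Hw0]|Sc0] := pselect (Sc !=set0); last first.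
  exists 1 => // w; rewrite mul1r.
  have [->|wn0] := eqVneq w 0; first by rewrite normr0 NY_ge0.
  exfalso; apply: Sc0; exists (`|w|^-1 *: w).
  by rewrite /Sc /= normrZ normfV normr_id mulVf // normr_eq0.
have [c Hc Hmin] := compact_EVT_min (ex_intro _ w0 Hw0) cSc
  (@continuous_subspaceT _ _ Sc NY NY_cont).
have Hc' : `|c| = 1 by move: Hc; rewrite inE.
have Nc : 0 < NY c.
  rewrite lt_def NY_ge0 andbT; apply/eqP => /NY_eq0 c0.
  by move: Hc'; rewrite c0 normr0 => /eqP; rewrite eq_sym oner_eq0.
exists (NY c)^-1; first by rewrite invr_gt0.
move=> w; have [->|wn0] := eqVneq w 0; first by rewrite normr0 NY0 mulr0.
have wp : 0 < `|w| by rewrite normr_gt0.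
have := Hmin (`|w|^-1 *: w); rewrite inE NYZ.
rewrite /Sc /= normrZ normfV normr_id mulVf ?normr_eq0 // => /(_ erefl) h.
rewrite ler_pdivlMl //.
have : `|w| * NY c <= `|w| * (`|w|^-1 * NY w) by rewrite ler_wpM2l // ltW.
by rewrite mulrA mulfV ?mul1r ?(gt_eqF wp) // mulrC.
Qed.

End NY.

Lemma cont_meas (G : ptopologicalType) (F : G -> R) : continuous F ->
  measurable_fun setT (F : borel_of G -> R).
Proof.
move=> cF; apply: (measurability _ (measurable_realfun.RGenOpens.measurableE R)).
move=> _ [_ [a [b ->] <-]]; rewrite setTI.
apply: sub_sigma_algebra; move/continuousP: cF; apply.
exact: interval_open.
Qed.

Lemma int_bound (G : ptopologicalType) (P : probability (borel_of G) R)
  (F : borel_of G -> R) (a d : R) : measurable_fun setT F ->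
  (forall t, `|a - F t| <= d) -> `|a - Rintegral P setT F| <= d.
Proof.
move=> mF H.
have iF : P.-integrable setT (EFin \o F).
  apply: measurable_bounded_integrable => //.
    by move: (probability_setT P) => /= ->; rewrite ltry.
  exists (`|a| + d); split; first exact: num_real.
  move=> M HM t _; have h := H t; rewrite distrC in h.
  have h2 := ler_normD a (F t - a); rewrite addrC subrK in h2.
  rewrite /=; lra.
have ic (r : R) : P.-integrable setT (EFin \o cst r).
  apply: measurable_bounded_integrable => //.
    by move: (probability_setT P) => /= ->; rewrite ltry.
  exists `|r|; split; first exact: num_real.
  by move=> M HM t _ /=; apply: ltW.
have cstE (r : R) : Rintegral P setT (cst r) = r.
  by rewrite Rintegral_cst //; move: (probability_setT P) => /= ->; rewrite /= mulr1.
have i1 := ic (a - d); have i2 := ic (a + d).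
have l1 : Rintegral P setT (cst (a - d)) <= Rintegral P setT F.
  apply: le_Rintegral => // t _; have := H t; rewrite ler_norml /cst; lra.
have l2 : Rintegral P setT F <= Rintegral P setT (cst (a + d)).
  apply: le_Rintegral => // t _; have := H t; rewrite ler_norml /cst; lra.
rewrite !cstE in l1 l2; rewrite ler_norml; apply/andP; split; lra.
Qed.

Section Rep.
Variables (G : ptopologicalType) (mul : G -> G -> G) (inv : G -> G) (e : G).
Hypothesis hG : is_compact_group mul inv e.
Variables (n : nat) (rho : G -> 'M[R]_n).
Hypothesis hr : is_cont_rep mul rho.

Lemma rep_e : rho e = 1%:M.
Proof.
case: hG => _ he _ _ _; case: hr => hu hm _.
have E : rho e = rho e *m rho e by rewrite -hm; case: (he e) => ->.
move: (congr1 (mulmx (invmx (rho e))) E).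
by rewrite mulmxA (mulVmx (hu e)) mul1mx => ->.
Qed.

Lemma rep_inv g : invmx (rho g) = rho (inv g).
Proof.
case: hG => _ _ hi _ _; case: hr => hu hm _.
rewrite -[RHS]mulmx1 -(mulmxV (hu g)) mulmxA -hm.
by case: (hi g) => -> _; rewrite rep_e mul1mx.
Qed.

Lemma rep_act g (x : 'cV[R]_n) : rho g *m (rho (inv g) *m x) = x.
Proof.
case: hG => _ _ hi _ _; case: hr => hu hm _.
by rewrite mulmxA -hm; case: (hi g) => _ ->; rewrite rep_e mul1mx.
Qed.

Lemma rep_inv_cont : continuous (fun g => rho (inv g)).
Proof.
case: hG => _ _ _ _ [ci _]; case: hr => _ _ cr.
by move=> g; apply: continuous_comp; [exact: ci|exact: cr].
Qed.

End Rep.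

End H.

Theorem theorem2 (R : realType) (G : ptopologicalType)
    (mul : G -> G -> G) (inv : G -> G) (e : G)
    (n m : nat) (rho1 : G -> 'M[R]_n) (rho2 : G -> 'M[R]_m)
    (NY : 'cV[R]_m -> R)
    (p : 'cV[R]_n -> probability (borel_of G) R)
    (Theta : Type) (f : Theta -> 'cV[R]_n -> 'cV[R]_m) :
  is_compact_group mul inv e ->
  is_cont_rep mul rho1 -> is_cont_rep mul rho2 ->
  is_norm NY ->
  equivariant_cond_distr mul rho1 p ->
  (forall th, continuous (f th)) ->
  (forall psi : 'cV[R]_n -> 'cV[R]_m, continuous psi ->
    forall K : set 'cV[R]_n, compact K ->
    forall eps : R, 0 < eps ->
    exists th, forall x, K x -> NY (psi x - f th x) <= eps) ->
  forall psi : 'cV[R]_n -> 'cV[R]_m, continuous psi ->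
    equivariant_fun rho1 rho2 psi ->
  forall K : set 'cV[R]_n, compact K ->
  forall eps : R, 0 < eps ->
  exists th, forall x, K x ->
    NY (psi x - symmetrized rho1 rho2 p (f th) x) <= eps.
Proof.
move=> hG hr1 hr2 hN _ cf univ psi cpsi epsi K cK eps eps0.
have [c c0 Hc] := @NY_low _ _ _ hN.
have cG : compact [set: G] by case: hG => _ _ _ _ [_ []].
have cr2 : continuous rho2 by case: hr2.
have [B B0 HB] : exists2 B, 0 <= B & forall g, `|rho2 g| <= B.
  have := compact_bounded (continuous_compact (@continuous_subspaceT _ _ [set: G] _ cr2) cG).
  move=> [M [Mr HM]]; exists (`|M| + 1); first by rewrite addr_ge0.
  move=> g; apply: (HM (`|M| + 1)); last by exists g.
  by apply: le_lt_trans (real_ler_norm Mr) _; rewrite ltrDl.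
pose Kp := (fun gx : G * 'cV[R]_n => rho1 (inv gx.1) *m gx.2) @` ([set: G] `*` K).
have cKp : compact Kp.
  apply: continuous_compact; last exact: compact_setX cG cK.
  apply: continuous_subspaceT; apply: cont_mulmx.
    move=> gx; apply: (@continuous_comp _ _ _ fst (fun g => rho1 (inv g))).
      exact: cvg_fst.
    exact: (@rep_inv_cont _ _ _ _ _ hG _ _ hr1).
  move=> gx; exact: cvg_snd.
pose C := @CN _ _ NY.
have C0 : 0 <= C by exact: (@CN_ge0 _ _ _ hN).
pose L := C * (B * c *+ m) + 1.
have L0 : 0 < L.
  have : 0 <= C * (B * c *+ m).
    by apply: mulr_ge0 => //; apply: mulrn_wge0; apply: mulr_ge0 => //; exact: ltW.
  rewrite /L; lra.
pose d := eps / L.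
have d0 : 0 < d by exact: divr_gt0.
have [th Hth] := univ psi cpsi Kp cKp d d0.
exists th => x Kx.
apply: le_trans (@NY_up _ _ _ hN _) _.
suff Hv : `|psi x - symmetrized rho1 rho2 p (f th) x| <= B * (c * d) *+ m.
  have E : L * d = eps by rewrite /d mulrC divfK // gt_eqF.
  have : C * `|psi x - symmetrized rho1 rho2 p (f th) x| <= C * (B * (c * d) *+ m).
    exact: ler_wpM2l.
  have -> : C * (B * (c * d) *+ m) = (L - 1) * d.
    by rewrite /L addrK -mulrnAl mulrA -[in RHS]mulrnAl !mulrA.
  move=> h; apply: le_trans h _; rewrite -E ler_wpM2r ?ltW //; lra.
apply: norm_le_entries.
  by apply: mulrn_wge0; apply: mulr_ge0 => //; apply: mulr_ge0; apply: ltW.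
move=> i j; rewrite (ord1 j) !mxE.
apply: int_bound.
  apply: cont_meas.
  have -> : (fun g : G => (rho2 g *m f th (invmx (rho1 g) *m x)) i ord0)
      = (fun g : G => (rho2 g *m f th (rho1 (inv g) *m x)) i ord0).
    by apply: funext => g; rewrite (@rep_inv _ _ _ _ _ hG _ _ hr1).
  move=> g; apply: (@continuous_comp _ _ _ (fun g : G => rho2 g *m f th (rho1 (inv g) *m x))
    (fun M : 'cV[R]_m => M i ord0)); last exact: coord_continuous.
  apply: cont_mulmx => // g'.
  apply: (@continuous_comp _ _ _ (fun g : G => rho1 (inv g) *m x) (f th)); last exact: cf.
  apply: cont_mulmx; first exact: (@rep_inv_cont _ _ _ _ _ hG _ _ hr1).
  exact: cst_continuous.
move=> t.
rewrite (@rep_inv _ _ _ _ _ hG _ _ hr1).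
set y := rho1 (inv t) *m x.
have Ky : Kp y by exists (t, x).
have Ex : psi x = rho2 t *m psi y by rewrite -epsi /y (@rep_act _ _ _ _ _ hG _ _ hr1).
rewrite Ex.
have -> : (rho2 t *m psi y) i ord0 - (rho2 t *m f th y) i ord0
    = (rho2 t *m (psi y - f th y)) i ord0 by rewrite mulmxBr !mxE.
set w := psi y - f th y.
have Hw : `|w| <= c * d.
  apply: le_trans (Hc w) _; apply: ler_wpM2l; first exact: ltW.
  exact: Hth.
rewrite mxE; apply: le_trans (ler_norm_sum _ _ _) _.
have -> : B * (c * d) *+ m = \sum_(k < m) B * (c * d).
  by rewrite sumr_const card_ord.
apply: ler_sum => k _; rewrite normrM.
apply: ler_pM => //.
  by apply: le_trans (HB t); exact: entry_le_norm.
by apply: le_trans Hw; exact: entry_le_norm.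
Qed.
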